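(* Let $N\ge2$. If $\{|\psi_{ij}\rangle\}_{i,j=1}^N$ is a pair of orthogonal quantum Latin squares of size $N$, then $|\psi\rangle=\frac1N\sum_{i,j=1}^N|i\rangle|j\rangle|\psi_{ij}\rangle$ is an AME(4,$N$) state. Conversely, if $|\psi\rangle\in(\mathbb{C}^N)^{\otimes4}$ is an AME(4,$N$) state, then the vectors $|\psi_{ij}\rangle:=N(\langle i|\otimes\langle j|\otimes\mathbb{I}\otimes\mathbb{I})|\psi\rangle\in\mathbb{C}^N\otimes\mathbb{C}^N$ form a pair of orthogonal quantum Latin squares of size $N$ and $|\psi\rangle=\frac1N\sum_{ij}|i\rangle|j\rangle|\psi_{ij}\rangle$.
   Context: $\{|1\rangle,\dots,|N\rangle\}$ is the computational basis of $\mathbb{C}^N$. A pure state $|\psi\rangle\in(\mathbb{C}^N)^{\otimes4}$ on parties $A,B,C,D$ is absolutely maximally entangled, AME(4,$N$), if its reduced density matrix on every pair of parties equals $\mathbb{I}_{N^2}/N^2$. An $N\times N$ array $\{|\psi_{ij}\rangle\}$ of vectors in $\mathbb{C}^N\otimes\mathbb{C}^N$ is a pair of orthogonal quantum Latin squares (OQLS) of size $N$ if: (1) $\{|\psi_{ij}\rangle\}_{i,j}$ is an orthonormal basis of $\mathbb{C}^N\otimes\mathbb{C}^N$; (2) for each of the two tensor factors $X$ and all $j,k$: $\mathrm{Tr}_X\sum_i|\psi_{ji}\rangle\langle\psi_{ki}|=\delta_{jk}\mathbb{I}_N$; (3) for each of the two tensor factors $X$ and all $j,k$: $\mathrm{Tr}_X\sum_i|\psi_{ij}\rangle\langle\psi_{ik}|=\delta_{jk}\mathbb{I}_N$.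 *)

(* Defs.v *)
From mathcomp Require Import all_boot all_algebra.
From mathcomp Require Import reals.
From mathcomp.real_closed Require Import complex.
Set Implicit Arguments. Unset Strict Implicit. Unset Printing Implicit Defensive.
Import GRing.Theory Num.Theory.
Local Open Scope ring_scope.

(* Computational basis |1>,...,|N> of C^N is indexed by 'I_N (= {0,...,N-1}).
   A vector of (C^N)^{(x)4} is a function 'I_N -> 'I_N -> 'I_N -> 'I_N -> C
   (psi a b c d = coefficient of |a>|b>|c>|d>, parties A,B,C,D in order).
   An N x N array {|psi_ij>} of vectors of C^N (x) C^N is a function
   Psi : 'I_N -> 'I_N -> ('I_N -> 'I_N -> C), Psi i j x y = <x|<y|psi_ij>.
   Bra-ket convention: |u><v| has entries u(x) * conj(v(y)). *)

Section Defs.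
Variables (R : realType) (N : nat).
Notation C := R[i].
Notation I := 'I_N.

Definition state4 := I -> I -> I -> I -> C.
Definition vec2 := I -> I -> C.
Definition array2 := I -> I -> vec2.

(* Reduced density matrix on the first two tensor factors (tracing out the
   last two) of |f><f|: rho(x,y; x',y') = sum_{k,l} f x y k l conj(f x' y' k l). *)
Definition rho12 (f : state4) (x y x' y' : I) : C :=
  \sum_(k : I) \sum_(l : I) f x y k l * (f x' y' k l)^*.

Definition rho_AB (psi : state4) := rho12 psi.
Definition rho_AC (psi : state4) := rho12 (fun x y k l => psi x k y l).
Definition rho_AD (psi : state4) := rho12 (fun x y k l => psi x k l y).
Definition rho_BC (psi : state4) := rho12 (fun x y k l => psi k x y l).
Definition rho_BD (psi : state4) := rho12 (fun x y k l => psi k x l y).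
Definition rho_CD (psi : state4) := rho12 (fun x y k l => psi k l x y).

Definition max_mixed2 (x y x' y' : I) : C :=
  ((x == x') && (y == y'))%:R / (N ^ 2)%:R.

Definition is_max_mixed (rho : I -> I -> I -> I -> C) : Prop :=
  forall x y x' y', rho x y x' y' = max_mixed2 x y x' y'.

Definition AME4 (psi : state4) : Prop :=
  is_max_mixed (rho_AB psi) /\ is_max_mixed (rho_AC psi) /\
  is_max_mixed (rho_AD psi) /\ is_max_mixed (rho_BC psi) /\
  is_max_mixed (rho_BD psi) /\ is_max_mixed (rho_CD psi).

Definition inner2 (u v : vec2) : C := \sum_(x : I) \sum_(y : I) (u x y)^* * v x y.

Definition is_onb2 (Psi : array2) : Prop :=
  (forall i j i' j', inner2 (Psi i j) (Psi i' j') = ((i == i') && (j == j'))%:R)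
  /\ (forall v : vec2, exists c : I -> I -> C,
        forall x y, v x y = \sum_(i : I) \sum_(j : I) c i j * Psi i j x y).

(* Tr_1 |u><v| and Tr_2 |u><v| as operators on C^N (matrix entries (b,b')) *)
Definition ptr1 (u v : vec2) (b b' : I) : C := \sum_(a : I) u a b * (v a b')^*.
Definition ptr2 (u v : vec2) (a a' : I) : C := \sum_(b : I) u a b * (v a' b)^*.

Definition OQLS (Psi : array2) : Prop :=
  [/\ is_onb2 Psi,
      (* (2) rows: Tr_X sum_i |psi_ji><psi_ki| = delta_jk I, X = 1, 2 *)
      ((forall j k b b', \sum_(i : I) ptr1 (Psi j i) (Psi k i) b b'
                         = ((j == k) && (b == b'))%:R)
      /\ (forall j k a a', \sum_(i : I) ptr2 (Psi j i) (Psi k i) a a'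
                         = ((j == k) && (a == a'))%:R))
    & (* (3) columns: Tr_X sum_i |psi_ij><psi_ik| = delta_jk I, X = 1, 2 *)
      ((forall j k b b', \sum_(i : I) ptr1 (Psi i j) (Psi i k) b b'
                         = ((j == k) && (b == b'))%:R)
      /\ (forall j k a a', \sum_(i : I) ptr2 (Psi i j) (Psi i k) a a'
                         = ((j == k) && (a == a'))%:R))].

Definition state_of_array (Psi : array2) : state4 :=
  fun a b c d => (N%:R)^-1 *
    \sum_(i : I) \sum_(j : I) ((a == i) && (b == j))%:R * Psi i j c d.

Definition array_of_state (psi : state4) : array2 :=
  fun i j c d => N%:R *
    \sum_(a : I) \sum_(b : I) ((a == i) && (b == j))%:R * psi a b c d.

End Defs.

(* Main.v *)
Require Import Defs.
From mathcomp Require Import all_boot all_algebra.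
From mathcomp Require Import reals.
From mathcomp.real_closed Require Import complex.
From Stdlib Require Import FunctionalExtensionality.
Local Open Scope ring_scope.
Import GRing.Theory Num.Theory.

Section H.
Variables (R : realType) (N : nat).
Hypothesis HN : (2 <= N)%N.
Notation C := R[i].
Notation I := 'I_N.

Lemma NR_neq0 : (N%:R : C) != 0.
Proof. by rewrite pnatr_eq0 -lt0n; apply: leq_trans HN. Qed.

Lemma sum_delta (x : I) (F : I -> C) : \sum_(x' : I) (x == x')%:R * F x' = F x.
Proof.
rewrite (bigD1 x) //= eqxx mul1r big1 ?addr0 // => i /negbTE.
by rewrite eq_sym => ->; rewrite mul0r.
Qed.

Lemma sum_delta2 (x y : I) (F : I -> I -> C) :
  \sum_(x' : I) \sum_(y' : I) ((x == x') && (y == y'))%:R * F x' y' = F x y.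
Proof.
rewrite -[RHS](sum_delta x (fun x' => F x' y)).
apply: eq_bigr => x' _; rewrite -(sum_delta y (fun y' => F x' y')) mulr_sumr.
by apply: eq_bigr => y' _; case: (x == x'); case: (y == y'); rewrite ?mul0r ?mul1r.
Qed.

Lemma scale_prod (s u v : C) : s^* = s -> (s*u) * (s*v)^* = s^+2 * (u * v^*).
Proof. by move=> hs; rewrite rmorphM /= hs expr2 mulrACA. Qed.

Lemma dsum_scale (s : C) (F : I -> I -> C) :
  \sum_(k : I) \sum_(l : I) s * F k l = s * \sum_(k : I) \sum_(l : I) F k l.
Proof. by rewrite mulr_sumr; apply: eq_bigr => k _; rewrite mulr_sumr. Qed.

Lemma soa (Psi : array2 R N) a b c d :
  state_of_array Psi a b c d = N%:R^-1 * Psi a b c d.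
Proof.
rewrite /state_of_array; congr (_ * _).
rewrite -[RHS](sum_delta2 a b (fun i j => Psi i j c d)) //.
Qed.

Lemma aos (psi : state4 R N) i j c d :
  array_of_state psi i j c d = N%:R * psi i j c d.
Proof.
rewrite /array_of_state; congr (_ * _).
rewrite -[RHS](sum_delta2 i j (fun a b => psi a b c d)).
apply: eq_bigr => a _; apply: eq_bigr => b _; by rewrite (eq_sym a) (eq_sym b).
Qed.

Lemma conjNV : ((N%:R : C)^-1)^* = N%:R^-1.
Proof. by rewrite fmorphV /= conjC_nat. Qed.
Lemma conjN : ((N%:R : C))^* = N%:R.
Proof. by rewrite conjC_nat. Qed.

Lemma NV2 : ((N%:R : C)^-1)^+2 = (N ^ 2)%:R^-1.
Proof. by rewrite exprVn natrX. Qed.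


Lemma keyS {s : C} {f g : I -> I -> I -> I -> C} :
  s^* = s -> (forall a b c d, f a b c d = s * g a b c d) ->
  forall x y x' y', rho12 f x y x' y' = s ^+ 2 * rho12 g x y x' y'.
Proof.
move=> hs hf x y x' y'; rewrite /rho12 -dsum_scale.
by apply: eq_bigr => k _; apply: eq_bigr => l _; rewrite !hf scale_prod.
Qed.

Lemma swap4 (F : I -> I -> I -> I -> C) :
  \sum_(a : I) \sum_(b : I) \sum_(c : I) \sum_(d : I) F a b c d =
  \sum_(c : I) \sum_(d : I) \sum_(a : I) \sum_(b : I) F a b c d.
Proof.
under eq_bigr => a _ do rewrite exchange_big.
rewrite exchange_big /=.
under eq_bigr => c _ do under eq_bigr => a _ do rewrite exchange_big.
by under eq_bigr => c _ do rewrite exchange_big.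
Qed.

Lemma sum_lin (u c : I -> I -> C) (P : I -> I -> I -> I -> C) :
  \sum_(a : I) \sum_(b : I) u a b * (\sum_(i : I) \sum_(j : I) c i j * P i j a b)
  = \sum_(i : I) \sum_(j : I) c i j * (\sum_(a : I) \sum_(b : I) u a b * P i j a b).
Proof.
under eq_bigr => a _ do under eq_bigr => b _ do
  (rewrite mulr_sumr; under eq_bigr => i _ do rewrite mulr_sumr).
rewrite swap4; apply: eq_bigr => i _; apply: eq_bigr => j _.
rewrite -dsum_scale; apply: eq_bigr => a _; apply: eq_bigr => b _.
by rewrite mulrCA.
Qed.

Lemma complete (Psi : array2 R N) : is_onb2 Psi ->
  forall x y x' y', \sum_(i : I) \sum_(j : I) Psi i j x y * (Psi i j x' y')^*
    = ((x == x') && (y == y'))%:R.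
Proof.
move=> [orth span] x y x' y'.
pose v := fun a b : I => ((a == x') && (b == y'))%:R : C.
have [c hc] := span v.
have ec : forall i j, c i j = (Psi i j x' y')^*.
  move=> i j.
  transitivity (inner2 (Psi i j) v).
    rewrite /inner2; under eq_bigr => a _ do under eq_bigr => b _ do rewrite hc.
    rewrite sum_lin.
    under eq_bigr => i' _ do under eq_bigr => j' _ do rewrite -/(inner2 _ _) orth.
    rewrite -[LHS](sum_delta2 i j c).
    apply: eq_bigr => i' _; apply: eq_bigr => j' _; exact: mulrC.
  rewrite /inner2 -(sum_delta2 x' y' (fun a b => (Psi i j a b)^*)).
  apply: eq_bigr => a _; apply: eq_bigr => b _.
  by rewrite /v (eq_sym a) (eq_sym b) mulrC.
transitivity (v x y); last by rewrite /v (eq_sym x) (eq_sym y).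
rewrite hc.
by apply: eq_bigr => i _; apply: eq_bigr => j _; rewrite ec mulrC.
Qed.


Lemma mm_scale (S : C) (x y x' y' : I) :
  S = ((x == x') && (y == y'))%:R ->
  (N%:R^-1)^+2 * S = max_mixed2 R x y x' y'.
Proof. by move=> ->; rewrite NV2 mulrC /max_mixed2. Qed.

Lemma dir1 (Psi : array2 R N) : OQLS Psi -> AME4 (state_of_array Psi).
Proof.
case=> onb [r1 r2] [c1 c2]; have [orth span] := onb.
have hs := conjNV.
split; [|split; [|split; [|split; [|split]]]] => x y x' y'.
- rewrite /rho_AB (keyS (g := Psi) hs); last by move=> *; rewrite soa.
  apply: mm_scale; rewrite (eq_sym x) (eq_sym y) -orth /inner2.
  by apply: eq_bigr => k _; apply: eq_bigr => l _; rewrite mulrC.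
- rewrite /rho_AC (keyS (g := fun a b c d => Psi a c b d) hs); last by move=> *; rewrite soa.
  apply: mm_scale; exact: r2.
- rewrite /rho_AD (keyS (g := fun a b c d => Psi a c d b) hs); last by move=> *; rewrite soa.
  apply: mm_scale; exact: r1.
- rewrite /rho_BC (keyS (g := fun a b c d => Psi c a b d) hs); last by move=> *; rewrite soa.
  apply: mm_scale; exact: c2.
- rewrite /rho_BD (keyS (g := fun a b c d => Psi c a d b) hs); last by move=> *; rewrite soa.
  apply: mm_scale; exact: c1.
- rewrite /rho_CD (keyS (g := fun a b c d => Psi c d a b) hs); last by move=> *; rewrite soa.
  apply: mm_scale; exact: complete.
Qed.

Lemma mm_unscale (x y x' y' : I) :
  (N%:R : C) ^+ 2 * max_mixed2 R x y x' y' = ((x == x') && (y == y'))%:R.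
Proof.
rewrite /max_mixed2 natrX mulrC -mulrA mulVf ?mulr1 //.
by rewrite -natrX pnatr_eq0 expn_eq0 negb_and -lt0n (leq_trans _ HN).
Qed.

Lemma dir2 (psi : state4 R N) : AME4 psi ->
  OQLS (array_of_state psi) /\ psi = state_of_array (array_of_state psi).
Proof.
move=> [hAB [hAC [hAD [hBC [hBD hCD]]]]].
have hs := conjN.
have eq2 : psi = state_of_array (array_of_state psi).
  apply: functional_extensionality_dep => a; apply: functional_extensionality_dep => b.
  apply: functional_extensionality_dep => c; apply: functional_extensionality_dep => d.
  by rewrite soa aos mulrA mulVf ?mul1r // NR_neq0.
split=> //; split.
- split.
  + move=> i j i' j'; rewrite /inner2.
    transitivity (N%:R ^+ 2 * rho_AB psi i' j' i j).
      rewrite /rho_AB -(keyS (f := array_of_state psi) (g := psi) hs); last by move=> *; rewrite aos.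
      by rewrite /rho12; apply: eq_bigr => k _; apply: eq_bigr => l _; rewrite mulrC.
    by rewrite hAB mm_unscale (eq_sym i) (eq_sym j).
  + move=> v; exists (fun i j => inner2 (array_of_state psi i j) v) => x y.
    rewrite /inner2.
    have -> : \sum_(i : I) \sum_(j : I) (\sum_(a : I) \sum_(b : I)
        (array_of_state psi i j a b)^* * v a b) * array_of_state psi i j x y
      = \sum_(a : I) \sum_(b : I) v a b * (\sum_(i : I) \sum_(j : I) (array_of_state psi i j a b)^* * array_of_state psi i j x y).
      under eq_bigr => i _ do under eq_bigr => j _ do
        (rewrite mulr_suml; under eq_bigr => a _ do rewrite mulr_suml).
      rewrite swap4; apply: eq_bigr => a _; apply: eq_bigr => b _.
      rewrite -dsum_scale; apply: eq_bigr => i _; apply: eq_bigr => j _.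
      by rewrite [_ * v a b]mulrC -mulrA.
    rewrite -[LHS](sum_delta2 x y v); apply: eq_bigr => a _; apply: eq_bigr => b _.
    rewrite mulrC; congr (_ * _); symmetry.
    transitivity (N%:R ^+ 2 * rho_CD psi x y a b); last by rewrite hCD mm_unscale.
    rewrite /rho_CD -(keyS (g := fun a b c d => psi c d a b) (f := fun a b c d => array_of_state psi c d a b) hs); last by move=> *; rewrite aos.
    by rewrite /rho12; apply: eq_bigr => k _; apply: eq_bigr => l _; rewrite mulrC.
- split=> j k p q.
  + transitivity (N%:R ^+ 2 * rho_AD psi j p k q); last by rewrite hAD mm_unscale.
    apply: (keyS (f := fun a b c d => array_of_state psi a c d b) (g := fun a b c d => psi a c d b) hs) => *; exact: aos.
  + transitivity (N%:R ^+ 2 * rho_AC psi j p k q); last by rewrite hAC mm_unscale.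
    apply: (keyS (f := fun a b c d => array_of_state psi a c b d) (g := fun a b c d => psi a c b d) hs) => *; exact: aos.
- split=> j k p q.
  + transitivity (N%:R ^+ 2 * rho_BD psi j p k q); last by rewrite hBD mm_unscale.
    apply: (keyS (f := fun a b c d => array_of_state psi c a d b) (g := fun a b c d => psi c a d b) hs) => *; exact: aos.
  + transitivity (N%:R ^+ 2 * rho_BC psi j p k q); last by rewrite hBC mm_unscale.
    apply: (keyS (f := fun a b c d => array_of_state psi c a b d) (g := fun a b c d => psi c a b d) hs) => *; exact: aos.
Qed.

End H.

Theorem mainTheorem12 (R : realType) (N : nat) (HN : (2 <= N)%N) :
  (forall Psi : array2 R N, OQLS Psi -> AME4 (state_of_array Psi))
  /\
  (forall psi : state4 R N, AME4 psi ->
     OQLS (array_of_state psi) /\ psi = state_of_array (array_of_state psi)).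
Proof.
split => [Psi|psi]; [exact: (@dir1 R N Psi) | exact: (@dir2 R N HN psi)].
Qed.
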